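(* Let $V$ be a real vector space with a basis $\mathbf{e}=\{e_\lambda\}_{\lambda\in\Lambda}$, and let $\boldsymbol{\phi}=\{\phi_\lambda\}_{\lambda\in\Lambda}\subseteq\operatorname{Hom}_{\mathbb{R}}(V,\mathbb{R})$ satisfy $\phi_\lambda(e_\mu)\ge0$ for all $\lambda\neq\mu$. For $x\in V$: (1) $x$ has a Zariski decomposition with respect to $(\mathbf{e},\boldsymbol{\phi})$ if and only if $(-\infty,x]_{\mathbf{e}}\cap\operatorname{Nef}(\boldsymbol{\phi})\neq\emptyset$; (2) a Zariski decomposition of $x$, if it exists, is unique; (3) if a Zariski decomposition $x=y+z$ exists with $z\neq0$, then (3.1) for the matrix $Q=(\phi_\lambda(e_\mu))_{\lambda,\mu\in\operatorname{Supp}(z;\mathbf{e})}$ one has $(-1)^{\#\operatorname{Supp}(z;\mathbf{e})}\det Q>0$, and if $Q$ is symmetric then $Q$ is negative definite; (3.2) $\{e_\lambda\}_{\lambda\in\operatorname{Supp}(z;\mathbf{e})}$ is linearly independent in $V/\operatorname{Num}(\boldsymbol{\phi})$.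
   Context: Write $x=\sum_\lambda x(\lambda;\mathbf{e})e_\lambda$. $x\le_{\mathbf{e}}y$ means $x(\lambda;\mathbf{e})\le y(\lambda;\mathbf{e})$ for all $\lambda$. $\operatorname{Supp}(x;\mathbf{e})=\{\lambda:x(\lambda;\mathbf{e})\neq0\}$, $(-\infty,x]_{\mathbf{e}}=\{v:v\le_{\mathbf{e}}x\}$, $\operatorname{Nef}(\boldsymbol{\phi})=\{v:\phi_\lambda(v)\ge0\ \forall\lambda\}$, $\operatorname{Num}(\boldsymbol{\phi})=\{v:\phi_\lambda(v)=0\ \forall\lambda\}$. A Zariski decomposition of $x$ with respect to $(\mathbf{e},\boldsymbol{\phi})$ is $x=y+z$ with (i) $y\in\operatorname{Nef}(\boldsymbol{\phi})$, $z\ge_{\mathbf{e}}0$; (ii) $\phi_\lambda(y)=0$ for all $\lambda\in\operatorname{Supp}(z;\mathbf{e})$; (iii) $\{w\in\sum_{\lambda\in\operatorname{Supp}(z;\mathbf{e})}\mathbb{R}_{\ge0}e_\lambda:\phi_\lambda(w)\ge0\ \forall\lambda\in\operatorname{Supp}(z;\mathbf{e})\}=\{0\}$. *)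

(* Defs.v *)
From HB Require Import structures.
From Stdlib Require Import ClassicalEpsilon.
From mathcomp Require Import all_boot all_order all_algebra.
From mathcomp Require Import reals.
Set Implicit Arguments. Unset Strict Implicit. Unset Printing Implicit Defensive.
Import Order.TTheory GRing.Theory Num.Theory.
Local Open Scope ring_scope.

Section ZariskiDefs.
Variables (R : realType) (V : lmodType R) (Lam : Type).

Definition lin_indep (e : Lam -> V) : Prop :=
  forall (n : nat) (f : 'I_n -> Lam) (c : 'I_n -> R),
    injective f -> \sum_(i < n) c i *: e (f i) = 0 -> forall i, c i = 0.

Definition spanning (e : Lam -> V) : Prop :=
  forall v : V, exists (n : nat) (f : 'I_n -> Lam) (c : 'I_n -> R),
    v = \sum_(i < n) c i *: e (f i).

Definition is_basis (e : Lam -> V) : Prop := lin_indep e /\ spanning e.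

Definition is_coord (e : Lam -> V) (v : V) (c : Lam -> R) : Prop :=
  exists (n : nat) (f : 'I_n -> Lam), injective f /\
    (forall l, c l <> 0 -> exists i, f i = l) /\
    v = \sum_(i < n) c (f i) *: e (f i).

Definition coord (e : Lam -> V) (v : V) : Lam -> R :=
  epsilon (inhabits (fun _ => 0)) (is_coord e v).

Definition le_e (e : Lam -> V) (x y : V) : Prop :=
  forall l, coord e x l <= coord e y l.

Definition Supp (e : Lam -> V) (x : V) (l : Lam) : Prop := coord e x l <> 0.

Definition Nef (phi : Lam -> {scalar V}) (v : V) : Prop :=
  forall l, 0 <= phi l v.

Definition Num_ (phi : Lam -> {scalar V}) (v : V) : Prop :=
  forall l, phi l v = 0.

Definition in_cone (e : Lam -> V) (S : Lam -> Prop) (w : V) : Prop :=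
  exists (n : nat) (f : 'I_n -> Lam) (c : 'I_n -> R),
    (forall i, S (f i)) /\ (forall i, 0 <= c i) /\
    w = \sum_(i < n) c i *: e (f i).

Definition zariski_decomp (e : Lam -> V) (phi : Lam -> {scalar V})
    (x y z : V) : Prop :=
  [/\ x = y + z,
      Nef phi y /\ le_e e 0 z,
      (forall l, Supp e z l -> phi l y = 0) &
      (forall w, in_cone e (Supp e z) w ->
         (forall l, Supp e z l -> 0 <= phi l w) -> w = 0)].

End ZariskiDefs.

(* Main.v *)
Require Import Defs.
From HB Require Import structures.
From Stdlib Require Import ClassicalEpsilon.
From mathcomp Require Import all_boot all_order all_algebra.
From mathcomp Require Import boolp classical_sets reals ring lra.
Set Implicit Arguments. Unset Strict Implicit. Unset Printing Implicit Defensive.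
Import Order.TTheory GRing.Theory Num.Theory.
Local Open Scope ring_scope.

Section Coord.
Variables (R : realType) (V : lmodType R) (Lam : Type) (e : Lam -> V).
Hypothesis he : is_basis e.
Notation L := {classic Lam}.

Definition sumv (s : seq L) (a : Lam -> R) : V := \sum_(l <- s) a l *: e l.

Lemma seq_ord (s : seq L) (F : Lam -> V) :
  \sum_(l <- s) F l = \sum_(i < size s) F (tnth (in_tuple s) i).
Proof. by rewrite big_tnth. Qed.

Lemma mem_tnthP (s : seq L) (l : L) : l \in s -> exists i, tnth (in_tuple s) i = l.
Proof.
move=> ls; have h : (index l s < size s)%N by rewrite index_mem.
by exists (Ordinal h); rewrite (tnth_nth l) nth_index.
Qed.

Lemma li_seq (s : seq L) a : uniq s -> sumv s a = 0 -> forall l, l \in s -> a l = 0.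
Proof.
move=> us s0 l ls.
have inj : injective (tnth (in_tuple s)) by apply/tuple_uniqP.
have := (he.1 (size s) (tnth (in_tuple s)) (fun i => a (tnth (in_tuple s) i)) inj).
rewrite -(seq_ord s (fun l => a l *: e l)) => /(_ s0) H.
by case: (mem_tnthP ls) => i <-; apply: H.
Qed.

Lemma ext_sum (s1 s2 : seq L) a : uniq s1 -> uniq s2 -> {subset s1 <= s2} ->
  (forall l, l \notin s1 -> a l = 0) -> sumv s2 a = sumv s1 a.
Proof.
move=> u1 u2 sub z.
rewrite /sumv (bigID (fun l => l \in s1)) /= [X in _ + X]big1 ?addr0; last first.
  by move=> l /z ->; rewrite scale0r.
rewrite -big_filter; apply: perm_big; apply: uniq_perm; rewrite ?filter_uniq //.
by move=> l; rewrite mem_filter; case: (boolP (l \in s1)) => // /sub ->.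
Qed.

Lemma sumvD s a b : sumv s (fun l => a l + b l) = sumv s a + sumv s b.
Proof. by rewrite /sumv -big_split; apply: eq_bigr => l _; rewrite scalerDl. Qed.

Lemma sumvZ s k a : sumv s (fun l => k * a l) = k *: sumv s a.
Proof. by rewrite /sumv scaler_sumr; apply: eq_bigr => l _; rewrite scalerA. Qed.

Lemma sumvN s a : sumv s (fun l => - a l) = - sumv s a.
Proof. by rewrite /sumv -sumrN; apply: eq_bigr => l _; rewrite scaleNr. Qed.

Definition srep (v : V) (a : Lam -> R) :=
  exists s : seq L, [/\ uniq s, (forall l, l \notin s -> a l = 0) & v = sumv s a].

Lemma srep_coord v a : srep v a -> is_coord e v a.
Proof.
case=> s [us z ->].
exists (size s), (tnth (in_tuple s)); split; [|split].
- have inj : injective (tnth (in_tuple s)) by apply/tuple_uniqP.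
  exact: inj.
- move=> l al0; have : (l : L) \in s by apply/negPn/negP => /z.
  
  by case/mem_tnthP => i <-; exists i.
- by rewrite /sumv seq_ord.
Qed.

Lemma coord_srep v a : is_coord e v a -> srep v a.
Proof.
case=> n [f [inj [sup ->]]].
exists [seq (f i : L) | i <- enum 'I_n]; split.
- by rewrite map_inj_uniq ?enum_uniq.
- move=> l ln; case: (a l =P 0) => // /sup [i fi]; exfalso; move/negP: ln; apply.
  by rewrite -fi; apply: (map_f (fun i => f i : L)); rewrite mem_enum.
- by rewrite /sumv big_map big_enum.
Qed.

Lemma srep_uniq v a b : srep v a -> srep v b -> forall l, a l = b l.
Proof.
case=> s1 [u1 z1 e1] [s2 [u2 z2 e2]] l.
pose s := undup (s1 ++ s2).
have us : uniq s by apply: undup_uniq.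
have sub1 : {subset s1 <= s} by move=> x xs; rewrite mem_undup mem_cat xs.
have sub2 : {subset s2 <= s} by move=> x xs; rewrite mem_undup mem_cat xs orbT.
have : sumv s (fun l => a l + - b l) = 0.
  rewrite sumvD sumvN (ext_sum _ _ sub1) // (ext_sum _ _ sub2) //.
  by rewrite -e1 -e2 subrr.
move/li_seq => /(_ us l) H.
have [ls|ls] := boolP ((l : L) \in s).
  by apply/eqP; rewrite -subr_eq0; apply/eqP; apply: H.
rewrite z1 ?z2 //; apply: contra ls; [exact: sub2 | exact: sub1].
Qed.

Lemma srep_exists v : exists a, srep v a.
Proof.
case: (he.2 v) => [n [f [c ->]]].
elim: n f c => [|n IH] f c.
  by exists (fun _ => 0); exists [::]; split => //; rewrite big_ord0 /sumv big_nil.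
rewrite big_ord_recl.
case: (IH (fun i => f (lift ord0 i)) (fun i => c (lift ord0 i))) => a [s [us z ->]].
pose m : L := f ord0.
pose a' := fun l => a l + c ord0 * (if (l : L) == m then 1 else 0).
pose s' := if m \in s then s else m :: s.
have us' : uniq s' by rewrite /s'; case: ifP => // /negbT ms /=; rewrite ms.
have sub : {subset s <= s'} by move=> x; rewrite /s'; case: ifP => // _ xs; rewrite inE xs orbT.
have msub : {subset [:: m] <= s'}.
  by move=> x; rewrite inE => /eqP ->; rewrite /s'; case: ifP => // _; rewrite inE eqxx.
exists a', s'; split => //.
  move=> l ls'; rewrite /a' z; last by apply: contra ls'; apply: sub.
  case: eqP => [lm|]; last by rewrite mulr0 add0r.
  by move: ls'; rewrite lm; move/negP; case; apply: msub; rewrite inE.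
rewrite /a' sumvD sumvZ (ext_sum _ _ sub) // addrC; congr (_ + _).
rewrite (@ext_sum [:: m]) //; last by move=> l; rewrite inE => /negbTE ->.
by rewrite /sumv big_seq1 eqxx scale1r.
Qed.

Definition cd v := Defs.coord e v.

Lemma coord_is v : is_coord e v (cd v).
Proof.
case: (srep_exists v) => a /srep_coord ha.
rewrite /cd /Defs.coord; apply: epsilon_spec; by exists a.
Qed.

Lemma cd_srep v : srep v (cd v).
Proof. exact/coord_srep/coord_is. Qed.

Lemma cdE (s : seq L) a : uniq s -> (forall l, l \notin s -> a l = 0) ->
  forall l, cd (sumv s a) l = a l.
Proof.
move=> us z l; apply: (srep_uniq (cd_srep _)); by exists s.
Qed.

Lemma cd_rep_any v (s : seq L) : uniq s -> (forall l, l \notin s -> cd v l = 0) ->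
  v = sumv s (cd v).
Proof.
move=> us zs; case: (cd_srep v) => s0 [us0 z0 ev].
pose t : seq L := [seq l <- s0 | cd v l != 0].
have ut : uniq t by apply: filter_uniq.
have zt : forall l, l \notin t -> cd v l = 0.
  move=> l; rewrite mem_filter negb_and negbK => /orP[/eqP //|]; exact: z0.
have t0 : {subset t <= s0} by move=> x; rewrite mem_filter => /andP[].
have ts : {subset t <= s}.
  move=> x; rewrite mem_filter => /andP[nz _]; apply/negPn/negP => /zs/eqP.
  by rewrite (negbTE nz).
by rewrite (ext_sum _ _ ts) // {1}ev (ext_sum _ _ t0).
Qed.

Lemma cdE_gen u v (P : Lam -> R -> R -> R) :
  (forall l, P l 0 0 = 0) ->
  exists s : seq L, [/\ uniq s, u = sumv s (cd u), v = sumv s (cd v) &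
    forall l, l \notin s -> P l (cd u l) (cd v l) = 0].
Proof.
move=> P0; case: (cd_srep u) => s1 [u1 z1 _]; case: (cd_srep v) => s2 [u2 z2 _].
pose s := undup (s1 ++ s2).
have us : uniq s by apply: undup_uniq.
have n1 : forall l, l \notin s -> l \notin s1.
  by move=> l; apply: contra => ls; rewrite mem_undup mem_cat ls.
have n2 : forall l, l \notin s -> l \notin s2.
  by move=> l; apply: contra => ls; rewrite mem_undup mem_cat ls orbT.
exists s; split => //.
- by apply: cd_rep_any => // l /n1 /z1.
- by apply: cd_rep_any => // l /n2 /z2.
- by move=> l ls; rewrite z1 ?z2 ?P0 //; [apply: n2 | apply: n1].
Qed.

Lemma cdD u v l : cd (u + v) l = cd u l + cd v l.
Proof.
have [s [us eu ev z]] := @cdE_gen u v (fun _ a b => a + b) (fun _ => addr0 0).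
by rewrite {1}eu {1}ev -sumvD cdE.
Qed.

Lemma cdZ k v l : cd (k *: v) l = k * cd v l.
Proof.
have [s [us eu _ z]] := @cdE_gen v v (fun _ a b => k * a) (fun _ => mulr0 k).
by rewrite {1}eu -sumvZ cdE.
Qed.

Lemma cdN v l : cd (- v) l = - cd v l.
Proof. by rewrite -scaleN1r cdZ mulN1r. Qed.

Lemma cdB u v l : cd (u - v) l = cd u l - cd v l.
Proof. by rewrite cdD cdN. Qed.

Lemma cd0 l : cd 0 l = 0.
Proof.
have -> : (0 : V) = sumv [::] (fun _ => 0) by rewrite /sumv big_nil.
by rewrite cdE.
Qed.

Lemma cd_e (m : L) l : cd (e m) l = if (l : L) == m then 1 else 0.
Proof.
have -> : e m = sumv [:: m] (fun l => if (l : L) == m then 1 else 0).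
  by rewrite /sumv big_seq1 eqxx scale1r.
by rewrite cdE // => x; rewrite inE => /negbTE ->.
Qed.

Lemma cd_eq0 v : (forall l, cd v l = 0) -> v = 0.
Proof.
move=> z; case: (cd_srep v) => s [_ _ ->].
by rewrite /sumv big1 // => l _; rewrite z scale0r.
Qed.

Lemma cd_inj u v : (forall l, cd u l = cd v l) -> u = v.
Proof.
by move=> h; apply/eqP; rewrite -subr_eq0; apply/eqP/cd_eq0 => l; rewrite cdB h subrr.
Qed.

Lemma cd_sum n (f : 'I_n -> Lam) (c : 'I_n -> R) l :
  cd (\sum_(i < n) c i *: e (f i)) l = \sum_(i < n) c i * (if (l : L) == f i then 1 else 0).
Proof.
elim/big_rec2: _ => [|i w y _ <-]; first by rewrite cd0.
by rewrite cdD cdZ cd_e.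
Qed.

Variable phi : Lam -> {scalar V}.
Hypothesis hphi : forall l m : Lam, l <> m -> 0 <= phi l (e m).

Lemma phi_sumv l s a : phi l (sumv s a) = \sum_(m <- s) a m * phi l (e m).
Proof. by rewrite raddf_sum; apply: eq_bigr => m _; exact: linearZ_LR. Qed.

Lemma phi_pos (l : L) s a : (forall m, 0 <= a m) -> a l = 0 -> 0 <= phi l (sumv s a).
Proof.
move=> a0 al; rewrite phi_sumv; apply: sumr_ge0 => m _.
have [->|ml] := eqVneq (m : L) l; first by rewrite al mul0r.
by apply: mulr_ge0 => //; apply: hphi => lm; move: ml; rewrite lm eqxx.
Qed.

Lemma le_cd (u v : V) : le_e e u v -> forall l, cd u l <= cd v l.
Proof. by []. Qed.

Lemma zd_basic x y z : zariski_decomp e phi x y z ->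
  [/\ forall l, cd x l = cd y l + cd z l, forall l, 0 <= cd z l & Nef phi y].
Proof.
case=> xE [ny z0] _ _; split => // [l|l]; first by rewrite xE cdD.
by have := z0 l; rewrite -/(cd 0 l) cd0.
Qed.

Lemma to_cone (t : seq L) (S : Lam -> Prop) a :
  (forall l, l \in t -> S l /\ 0 <= a l) -> in_cone e S (sumv t a).
Proof.
move=> h; exists (size t), (tnth (in_tuple t)), (fun i => a (tnth (in_tuple t) i)).
split; [|split].
- by move=> i; case: (h _ (mem_tnth i (in_tuple t))).
- by move=> i; case: (h _ (mem_tnth i (in_tuple t))).
- by rewrite /sumv seq_ord.
Qed.

Lemma zd_max x y z v : zariski_decomp e phi x y z -> le_e e v x -> Nef phi v ->
  le_e e v y.
Proof.
move=> Z vx nv; have [cx zp ny] := zd_basic Z.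
case: Z => _ _ hii hiii.
pose d := v - y.
have cdd l : cd d l = cd v l - cd y l by rewrite cdB.
have dz l : cd d l <= cd z l by rewrite cdd; have := vx l; rewrite -/(cd v l) -/(cd x l) cx; lra.
case: (cd_srep d) => s [us zs ed].
pose a l := if 0 < cd d l then cd d l else 0.
have a0 m : 0 <= a m by rewrite /a; case: ifP => // /ltW.
pose t : seq L := [seq l <- s | 0 < cd d l].
have wt : sumv s a = sumv t (cd d).
  rewrite /sumv big_filter [RHS]big_mkcond; apply: eq_bigr => l _.
  by rewrite /a; case: ifP => //; rewrite scale0r.
have w0 : sumv s a = 0.
  apply: hiii.
    rewrite wt; apply: to_cone => l; rewrite mem_filter => /andP[dl _]; split; last exact: ltW.
    by rewrite /Supp -/(cd z l); have := dz l; lra.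
  move=> l Sl.
  have [dl|dl] := ltP 0 (cd d l).
    have -> : sumv s a = d + sumv s (fun m => a m - cd d m).
      by rewrite sumvD sumvN -ed addrC subrK.
    rewrite raddfD /= addr_ge0 //.
      by rewrite /d raddfB /= (hii l Sl) subr0.
    apply: (phi_pos (l := l)) => [m|]; rewrite /a; first by case: ifP => //; lra.
    by rewrite dl subrr.
  by apply: (phi_pos (l := l)) => //; rewrite /a ltNge dl.
move=> l; rewrite -/(cd v l) -/(cd y l).
suff : cd d l <= 0 by rewrite cdd; lra.
have [ls|ls] := boolP ((l : L) \in s); last by rewrite zs.
have := li_seq us w0 ls; rewrite /a; case: ifP => //; first by lra.
by move/negbT; rewrite -leNgt.
Qed.

Definition Kset x v0 v := [/\ le_e e v x, Nef phi v & le_e e v0 v].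

Lemma exist_max x v0 : le_e e v0 x -> Nef phi v0 ->
  exists y, Kset x v0 y /\ forall v, Kset x v0 v -> le_e e v y.
Proof.
move=> v0x nv0.
have P0 : forall l : Lam, (fun (_ : Lam) (a b : R) => if (a == 0) && (b == 0) then 0 else 1 : R) l 0 0 = 0.
  by move=> l /=; rewrite eqxx.
have [F [uF _ _ zF]] := @cdE_gen x v0 (fun (_ : Lam) (a b : R) => if (a == 0) && (b == 0) then 0 else 1 : R) P0.
have zF' l : l \notin F -> cd x l = 0 /\ cd v0 l = 0.
  move=> /zF; case: (cd x l =P 0) => [->|_]; case: (cd v0 l =P 0) => [->|_] //=; by move/eqP; rewrite oner_eq0.
clear P0 zF.
have kF v l : Kset x v0 v -> l \notin F -> cd v l = 0.
  case=> vx _ v0v /zF' [h1 h2]; apply/eqP; rewrite eq_le.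
  by have := vx l; have := v0v l; rewrite -!/(cd _ l) h1 h2 => -> ->.
pose E (m : Lam) : set R := fun r => exists v, Kset x v0 v /\ cd v m = r.
have hasE m : has_sup (E m).
  split; first by exists (cd v0 m), v0; split => //; split => // l.
  by exists (cd x m) => r [v [[vx _ _] <-]]; apply: vx.
pose sm (m : Lam) := if (m : L) \in F then sup (E m) else 0.
pose y := sumv F sm.
have cy l : cd y l = sm l.
  by apply: cdE => // m /negbTE mF; rewrite /sm mF.
have ub v l : Kset x v0 v -> cd v l <= cd y l.
  move=> Kv; rewrite cy /sm; case: ifP => lF; last by rewrite kF ?lF.
  by apply: (sup_upper_bound (hasE l)); exists v.
have yx l : cd y l <= cd x l.
  rewrite cy /sm; case: ifP => lF; last by have [-> _] := zF' l (negbT lF).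
  apply: ge_sup; first by exists (cd v0 l), v0; split => //; split => // k.
  by move=> r [v [[vx _ _] <-]]; apply: vx.
have v0K : Kset x v0 v0 by split => // l.
have vmax u v : Kset x v0 u -> Kset x v0 v -> exists w, Kset x v0 w /\
    forall l, cd u l <= cd w l /\ cd v l <= cd w l.
  move=> Ku Kv.
  pose mx l := if cd u l <= cd v l then cd v l else cd u l.
  pose w := sumv F mx.
  have cw l : cd w l = mx l.
    apply: cdE => // m mF; rewrite /mx !kF //; by case: ifP.
  have ge l : cd u l <= cd w l /\ cd v l <= cd w l.
    by rewrite cw /mx; case: ifP => h; lra.
  exists w; split => //; split.
  - move=> l; rewrite -!/(cd _ l) cw /mx; case: Ku => ux _ _; case: Kv => vx _ _.
    by have := ux l; have := vx l; case: ifP.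
  - move=> l.
    have eu : u = sumv F (cd u) by apply: cd_rep_any => // m /kF; apply.
    have ev : v = sumv F (cd v) by apply: cd_rep_any => // m /kF; apply.
    have [h|h] := boolP (cd u l <= cd v l).
      have -> : w = v + sumv F (fun m => mx m - cd v m) by rewrite sumvD sumvN -ev addrC subrK.
      rewrite raddfD /= addr_ge0 //; first by case: Kv.
      apply: (phi_pos (l := l)) => [m|]; first by have := ge m; rewrite cw; lra.
      by rewrite /mx h subrr.
    have -> : w = u + sumv F (fun m => mx m - cd u m) by rewrite sumvD sumvN -eu addrC subrK.
    rewrite raddfD /= addr_ge0 //; first by case: Ku.
    apply: (phi_pos (l := l)) => [m|]; first by have := ge m; rewrite cw; lra.
    by rewrite /mx (negbTE h) subrr.
  - by move=> l; case: Ku => _ _ /(_ l) h; have h' : cd v0 l <= cd u l := h; exact: le_trans h' (ge l).1.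
have approx eps (t : seq L) : 0 < eps -> exists u, Kset x v0 u /\
    forall m, m \in t -> m \in F -> sup (E m) - eps < cd u m.
  move=> eps0; elim: t => [|m t [u [Ku hu]]]; first by exists v0.
  have [mF|mF] := boolP (m \in F); last first.
    by exists u; split => // k; rewrite inE => /orP[/eqP ->|/hu//]; rewrite (negbTE mF).
  have [r [v [Kv <-]] hr] := sup_adherent eps0 (hasE m).
  have [w [Kw hw]] := vmax u v Ku Kv.
  exists w; split => // k; rewrite inE => /orP[/eqP ->|kt] kF'.
    by have := (hw m).2; lra.
  by have := hu k kt kF'; have := (hw k).1; lra.
have yK : Kset x v0 y.
  split => //; last by move=> l; apply: ub.
  move=> l; rewrite leNgt; apply/negP => hl.
  pose del := - phi l y.
  pose M := \sum_(m <- F) `|phi l (e m)| + 1.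
  have M1 : 1 <= M by rewrite /M lerDr sumr_ge0.
  have M0 : 0 < M by lra.
  pose eps := del / M.
  have eps0 : 0 < eps by rewrite /eps divr_gt0 // /del; lra.
  have [u [Ku hu]] := approx eps F eps0.
  have eu : u = sumv F (cd u) by apply: cd_rep_any => // m /kF; apply.
  have : phi l u - phi l y <= eps * (M - 1).
    rewrite {1}eu /y !phi_sumv -sumrB /M addrK mulr_sumr.
    rewrite big_seq_cond [X in _ <= X]big_seq_cond; apply: ler_sum => m /andP[mF _].
    rewrite -mulrBl.
    have h1 : sup (E m) - eps < cd u m by apply: hu.
    have h2 : cd u m <= sm m by rewrite -cy; apply: ub.
    have h3 : sm m = sup (E m) by rewrite /sm mF.
    apply: (le_trans (ler_norm _)); rewrite normrM ler_wpM2r //.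
    by rewrite ler_norml; apply/andP; split; lra.
  have : eps * (M - 1) < del.
    rewrite /eps mulrBr mulr1 -mulrA mulVf ?mulr1; last by lra.
    by have : 0 < del / M by [] ; lra.
  case: Ku => _ /(_ l) nu _; rewrite /del; lra.
exists y; split => // v Kv l; exact: ub.
Qed.

Lemma zd_exists x v0 : le_e e v0 x -> Nef phi v0 -> exists y z, zariski_decomp e phi x y z.
Proof.
move=> v0x nv0; have [y [[yx ny v0y] ymax]] := exist_max v0x nv0.
exists y, (x - y).
have cz l : cd (x - y) l = cd x l - cd y l by rewrite cdB.
have yx' l : cd y l <= cd x l := yx l.
have zp l : 0 <= cd (x - y) l by rewrite cz; have := yx' l; lra.
have ii : forall l, Supp e (x - y) l -> phi l y = 0.
  move=> l Sl; apply/eqP; rewrite eq_le (ny l) andbT; apply/negP => /negP.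
  rewrite -ltNge => py.
  have zl : 0 < cd (x - y) l by rewrite lt0r; apply/andP; split => //; apply/eqP.
  pose p := phi l (e l).
  pose eps := Num.min (cd (x - y) l) (phi l y / (`|p| + 1)).
  have p1 : 0 < `|p| + 1 by rewrite ltr_pwDr.
  have eps0 : 0 < eps by rewrite lt_min zl divr_gt0.
  have eps1 : eps <= cd (x - y) l by rewrite ge_min lexx.
  have eps2 : eps * (`|p| + 1) <= phi l y.
    by rewrite -ler_pdivlMr // ge_min lexx orbT.
  pose v := y + eps *: e l.
  have cv m : cd v m = cd y m + eps * (if (m : L) == l then 1 else 0).
    by rewrite cdD cdZ cd_e.
  have Kv : Kset x v0 v.
    split.
    - move=> m; rewrite -!/(cd _ m) cv; case: eqP => [->|_]; last by rewrite mulr0 addr0.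
      by rewrite mulr1; have := eps1; rewrite cz; lra.
    - move=> m; rewrite /v raddfD /= linearZ_LR /=.
      have [ml|ml] := eqVneq (m : L) l.
        rewrite ml -/p; have := ler_norm (- p); rewrite normrN; nra.
      apply: addr_ge0 => //; apply: mulr_ge0; first exact: ltW.
      by apply: hphi => ml'; move: ml; rewrite ml' eqxx.
    - move=> m; rewrite -!/(cd _ m) cv; have := v0y m; rewrite -!/(cd _ m).
      case: eqP => _; last by rewrite mulr0 addr0.
      by rewrite mulr1; lra.
  have := ymax v Kv l; rewrite -!/(cd _ l) cv eqxx mulr1; lra.
split.
- by rewrite addrC subrK.
- split => // l; rewrite -!/(cd _ l) cd0; exact: zp.
- exact: ii.
move=> w [n [f [c [Sf [c0 ->]]]]] hw.
set w' := \sum_(i < n) c i *: e (f i).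
have cw m : cd w' m = \sum_(i < n) c i * (if (m : L) == f i then 1 else 0) by apply: cd_sum.
have cw0 m : 0 <= cd w' m.
  by rewrite cw; apply: sumr_ge0 => i _; apply: mulr_ge0 => //; case: ifP.
have zf i : 0 < cd (x - y) (f i) by rewrite lt0r zp andbT; apply/eqP; apply: Sf.
pose T := \sum_(i < n) c i / cd (x - y) (f i).
have T0 : 0 <= T by apply: sumr_ge0 => i _; apply: divr_ge0 => //; apply: ltW.
pose eps := (1 + T)^-1.
have eps0 : 0 < eps by rewrite invr_gt0; lra.
have epsT : eps * (1 + T) = 1 by rewrite mulVf //; lra.
pose v := y + eps *: w'.
have cv m : cd v m = cd y m + eps * cd w' m by rewrite cdD cdZ.
have Kv : Kset x v0 v.
  split.
  - move=> m; rewrite -!/(cd _ m) cv.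
    suff : eps * cd w' m <= cd (x - y) m by rewrite cz; lra.
    have [zm|zm] := eqVneq (cd (x - y) m) 0.
      have -> : cd w' m = 0.
        rewrite cw big1 // => i _; case: eqP => [fi|]; last by rewrite mulr0.
        by exfalso; apply: (Sf i); rewrite -fi.
      by rewrite mulr0 zm.
    have zm0 : 0 < cd (x - y) m by rewrite lt0r zm zp.
    have : cd w' m <= cd (x - y) m * T.
      rewrite cw /T mulr_sumr; apply: ler_sum => i _.
      case: eqP => [->|_]; last by rewrite mulr0 mulr_ge0 // divr_ge0 // ltW.
      by rewrite mulr1 mulrCA divff ?mulr1 // gt_eqF.
    move=> h; have : eps * cd w' m <= eps * (cd (x - y) m * T) by rewrite ler_wpM2l // ltW.
    move=> h2; apply: (le_trans h2).
    have -> : eps * (cd (x - y) m * T) = cd (x - y) m * (eps * T) by ring.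
    rewrite ler_piMr // ?ltW //.
    have : eps * T = 1 - eps by rewrite -epsT; ring.
    by move=> ->; lra.
  - move=> m; rewrite /v raddfD /= linearZ_LR /=.
    have [Sm|Sm] := boolP (cd (x - y) m != 0).
      rewrite (ii m (elimN eqP Sm)) add0r; apply: mulr_ge0; first exact: ltW.
      by apply: hw; apply/eqP.
    apply: addr_ge0 => //; apply: mulr_ge0; first exact: ltW.
    rewrite /w' raddf_sum /=; apply: sumr_ge0 => i _; rewrite linearZ_LR /=.
    apply: mulr_ge0 => //; apply: hphi => mf; apply: (Sf i); rewrite -mf.
    by apply/eqP; rewrite negbK in Sm.
  - move=> m; rewrite -!/(cd _ m) cv; have := v0y m; rewrite -!/(cd _ m).
    by have := cw0 m; nra.
apply: cd_eq0 => m; apply/eqP; rewrite eq_le cw0 andbT.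
have := ymax v Kv m; rewrite -!/(cd _ m) cv.
move=> h; have : eps * cd w' m <= 0 by lra.
by rewrite pmulr_rle0.
Qed.

End Coord.

Section Mat.
Variable R : realFieldType.

Definition Hoff n (A : 'M[R]_n) := forall i j, i != j -> 0 <= A i j.
Definition HH n (A : 'M[R]_n) := forall c : 'cV[R]_n, (forall i, 0 <= c i 0) ->
   (forall i, 0 <= (A *m c) i 0) -> c = 0.
Definition Concl n (A : 'M[R]_n) := 0 < (-1) ^+ n * \det A /\
   (A^T = A -> forall v : 'rV[R]_n, v != 0 -> (v *m A *m v^T) 0 0 < 0).

Lemma forall_split n (P : 'I_(1 + n) -> Prop) :
  P (lshift n 0) -> (forall k, P (rshift 1 k)) -> forall i, P i.
Proof.
move=> h0 h1 i; rewrite -[i]splitK; case: (split i) => [j|k] /=; last exact: h1.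
by rewrite (ord1 j).
Qed.

Ltac spl := match goal with |- forall i, @?P i => refine (@forall_split _ P _ _); [|move=> ?] end.

Lemma Zblock n (a : R) (r : 'M[R]_(1, n)) (c : 'M[R]_(n, 1)) (D : 'M[R]_n) :
  (forall B : 'M[R]_n, Hoff B -> HH B -> Concl B) ->
  Hoff (block_mx a%:M r c D) -> HH (block_mx a%:M r c D) ->
  Concl (block_mx a%:M r c D).
Proof.
move=> IH Ho HA; rewrite /HH in HA; rewrite /Hoff in Ho.
have hr j : 0 <= r 0 j.
  by have := Ho (lshift n 0) (rshift 1 j); rewrite eq_lrshift block_mxEur; apply.
have hc i : 0 <= c i 0.
  by have := Ho (rshift 1 i) (lshift n 0); rewrite eq_rlshift block_mxEdl; apply.
have hD i j : i != j -> 0 <= D i j.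
  move=> ij; have := Ho (rshift 1 i) (rshift 1 j).
  by rewrite (inj_eq (@rshift_inj 1 n)) ij block_mxEdr; apply.
have a0 : a < 0.
  rewrite ltNge; apply/negP => ha.
  have : col_mx (1%:M : 'M[R]_1) (0 : 'cV[R]_n) = 0.
    apply: HA; rewrite ?mul_block_col ?mulmx0 ?addr0 ?mulmx1.
    1,2: by spl; rewrite ?col_mxEu ?col_mxEd ?mxE ?eqxx ?mulr1n ?hc ?ler01.
  move/matrixP/(_ (lshift n 0) 0); rewrite col_mxEu !mxE /=.
  by move/eqP; rewrite oner_eq0.
pose B := D - c *m (a^-1 *: r).
have ai0 : a^-1 < 0 by rewrite invr_lt0.
have HoB : Hoff B.
  move=> i j ij; rewrite !mxE big_ord1 !mxE.
  rewrite -[ord0]/(0 : 'I_1).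
  have := hD i j ij; have := mulr_ge0 (hc i) (hr j); nra.
have HHB : HH B.
  move=> u u0 Bu0.
  pose p := (r *m u) 0 0.
  have p0 : 0 <= p by rewrite /p mxE; apply: sumr_ge0 => k _; apply: mulr_ge0.
  pose t := - (a^-1 * p).
  have E : block_mx a%:M r c D *m col_mx t%:M u = col_mx 0 (B *m u).
    rewrite mul_block_col; congr col_mx.
      rewrite [r *m u]mx11_scalar -/p -scalar_mxM -raddfD /=.
      have -> : a * t + p = 0 by rewrite /t; field; lra.
      by rewrite raddf0.
    rewrite /B mulmxBl mul_mx_scalar -mulmxA -scalemxAl [r *m u]mx11_scalar -/p.
    by rewrite scale_scalar_mx mul_mx_scalar /t scaleNr addrC.
  have : col_mx t%:M u = 0.
    apply: HA; rewrite ?E.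
  - spl; rewrite ?col_mxEu ?col_mxEd ?mxE //.
    rewrite eqxx mulr1n /t; nra.
  - by spl; rewrite ?col_mxEu ?col_mxEd ?Bu0 ?mxE.
  by move/eqP; rewrite col_mx_eq0 => /andP[_ /eqP].
have [IHd IHq] := IH B HoB HHB.
split.
  have F : block_mx a%:M r c D =
      block_mx 1%:M 0 (a^-1 *: c) 1%:M *m block_mx a%:M r 0 B.
    rewrite mulmx_block !mul0mx !mulmx0 !mul1mx !addr0.
    congr block_mx.
      by rewrite mul_mx_scalar scalerA divff ?scale1r // ltr0_neq0.
    by rewrite /B -scalemxAl -scalemxAr addrC subrK.
  rewrite F det_mulmx det_lblock det_ublock !det1 det_scalar1 -[(1 + n)%N]/(n.+1) exprS.
  have : 0 < - a * ((-1) ^+ n * \det B) by apply: mulr_gt0; lra.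
  rewrite !mul1r => h; have -> : -1 * (-1) ^+ n * (a * \det B) = - a * ((-1) ^+ n * \det B) by ring.
  exact: h.
move=> Hs v vn0.
move: Hs; rewrite tr_block_mx => /eq_block_mx [_ Hcr Hrc HD].
have HBs : B^T = B.
  rewrite /B linearB /= trmx_mul HD linearZ /= Hcr -scalemxAl -scalemxAr.
  by rewrite -[c in RHS]Hrc.
have vE : v = row_mx (lsubmx v 0 0)%:M (rsubmx v) by rewrite -mx11_scalar hsubmxK.
move: vE; set b := lsubmx v 0 0; set w := rsubmx v; clearbody b w => vE.
subst v.
set p := (r *m w^T) 0 0.
set q := (w *m D *m w^T) 0 0.
have e1 : w *m c = p%:M.
  by rewrite -Hrc -[w]trmxK -trmx_mul [r *m _]mx11_scalar tr_scalar_mx.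
have e2 : r *m w^T = p%:M by rewrite [LHS]mx11_scalar.
have T : (row_mx b%:M w *m block_mx a%:M r c D *m (row_mx b%:M w)^T) 0 0 = (b * a + p) * b + b * p + q.
  rewrite tr_row_mx mul_row_block mul_row_col tr_scalar_mx e1.
  have e3 : b%:M *m r *m w^T = (b * p)%:M by rewrite -mulmxA e2 -scalar_mxM.
  rewrite !mulmxDl e3 -!scalar_mxM [w *m D *m w^T]mx11_scalar -/q -!raddfD /= mxE eqxx mulr1n.
  ring.
rewrite T.
have [w0|wn0] := eqVneq w 0.
  have -> : p = 0 by rewrite /p w0 trmx0 mulmx0 mxE.
  have -> : q = 0 by rewrite /q w0 mul0mx mul0mx mxE.
  have bn0 : b != 0.
    apply: contraNneq vn0 => b0; rewrite b0 w0.
    by rewrite raddf0 row_mx0.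
  have : 0 < b ^+ 2 by rewrite exprn_even_gt0.
  nra.
have := IHq HBs w wn0.
have -> : (w *m B *m w^T) 0 0 = q - p * (a^-1 * p).
  rewrite /B mulmxBr mulmxBl mulmxA e1 mul_scalar_mx -!scalemxAl e2.
  rewrite !scale_scalar_mx [w *m D *m w^T]mx11_scalar -/q -raddfB /= mxE eqxx mulr1n.
  done.
move=> hs.
set s := q - p * (a^-1 * p) in hs.
have hq : q = s + p * (a^-1 * p) by rewrite /s subrK.
have key : a * ((b * a + p) * b + b * p + q) = (a * b + p) ^+ 2 + a * s.
  rewrite hq; field; lra.
have := sqr_ge0 (a * b + p).
nra.
Qed.
End Mat.

Lemma Zmat (R : realFieldType) n (A : 'M[R]_n) : Hoff A -> HH A -> Concl A.
Proof.
elim: n A => [|n IH] A Ho HA.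
  split; first by rewrite det_mx00 expr0 mul1r ltr01.
  by move=> _ v; rewrite thinmx0 eqxx.
pose A' : 'M[R]_(1 + n) := A.
have := @Zblock R n (ulsubmx A' 0 0) (ursubmx A') (dlsubmx A') (drsubmx A') IH.
by rewrite -mx11_scalar submxK; apply.
Qed.
Unset Implicit Arguments.

Theorem proposition1p1p1 (R : realType) (V : lmodType R) (Lam : Type)
    (e : Lam -> V) (phi : Lam -> {scalar V})
    (he : is_basis e)
    (hphi : forall l m : Lam, l <> m -> 0 <= phi l (e m)) :
  (* (1) existence criterion *)
  (forall x : V,
     (exists y z : V, zariski_decomp e phi x y z) <->
     (exists v : V, le_e e v x /\ Nef phi v)) /\
  (* (2) uniqueness *)
  (forall x y z y' z' : V,
     zariski_decomp e phi x y z -> zariski_decomp e phi x y' z' ->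
     y = y' /\ z = z') /\
  (* (3) properties of the negative part, for any enumeration f of Supp(z;e) *)
  (forall x y z : V, zariski_decomp e phi x y z -> z <> 0 ->
   forall (n : nat) (f : 'I_n -> Lam), injective f ->
     (forall l, Supp e z l <-> exists i, f i = l) ->
     let Q : 'M[R]_n := \matrix_(i, j) phi (f i) (e (f j)) in
     (* (3.1) *)
     (0 < (-1) ^+ n * \det Q /\
      (Q^T = Q -> forall v : 'rV[R]_n, v <> 0 -> (v *m Q *m v^T) 0 0 < 0)) /\
     (* (3.2) linear independence of {e_l}_{l in Supp z} in V / Num(phi) *)
     (forall c : 'I_n -> R,
        Num_ phi (\sum_(i < n) c i *: e (f i)) -> forall i, c i = 0)).
Proof.
have yle x y z : zariski_decomp e phi x y z -> le_e e y x /\ Nef phi y.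
  move=> Z; have [cx zp ny] := zd_basic he Z; split => // l.
  change (cd e y l <= cd e x l); rewrite cx; have := zp l; lra.
split.
  move=> x; split; first by case=> y [z Z]; exists y; apply: yle Z.
  by case=> v [vx nv]; apply: (zd_exists he hphi vx nv).
split.
  move=> x y z y' z' Z Z'.
  have [h1 h2] := yle _ _ _ Z'; have [h3 h4] := yle _ _ _ Z.
  have a1 := zd_max he hphi Z h1 h2; have a2 := zd_max he hphi Z' h3 h4.
  have yy : y = y'.
    apply: (cd_inj he) => l; apply/eqP; rewrite eq_le; apply/andP; split; [exact: a2|exact: a1].
  split => //; case: Z => xE _ _ _; case: Z' => xE' _ _ _.
  by apply: (@addrI _ y); rewrite -xE yy -xE'.
move=> x y z Z _ n f injf hS Q.
case: Z => _ _ _ hiii.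
have HQ : HH Q.
  move=> c c0 Qc0.
  pose w := \sum_(i < n) c i 0 *: e (f i).
  have w0 : w = 0.
    apply: hiii.
      exists n, f, (fun i => c i 0); split; [|split] => // i.
      by apply/hS; exists i.
    move=> l /hS [j <-].
    have := Qc0 j; rewrite mxE.
    rewrite /w raddf_sum /=.
    congr (_ <= _); apply: eq_bigr => i _; rewrite mxE linearZ_LR /=; exact: mulrC.
  apply/matrixP => i j; rewrite (ord1 j) mxE.
  exact: (he.1 n f (fun i => c i 0) injf w0 i).
have HoQ : Hoff Q.
  move=> i j ij; rewrite mxE; apply: hphi => fij; move: ij; rewrite (injf _ _ fij) eqxx.
  by [].
have [Hd Hq] := Zmat HoQ HQ.
split.
  split => // Hs v /eqP vn0; exact: Hq.
move=> c Nc.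
have detn0 : \det Q != 0 by apply: contraTneq Hd => ->; rewrite mulr0 ltxx.
have uQ : Q \in unitmx by rewrite unitmxE unitfE.
pose cv : 'cV[R]_n := \col_i c i.
have Qc : Q *m cv = 0.
  apply/matrixP => j k; rewrite !mxE.
  rewrite -[RHS](Nc (f j)) raddf_sum /=.
  apply: eq_bigr => i _; rewrite !mxE linearZ_LR /=; exact: mulrC.
have : cv = 0 by rewrite -(mulKmx uQ cv) Qc mulmx0.
by move/matrixP => h i; have := h i 0; rewrite !mxE.
Qed.
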